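(* Let $A \in \mathbb{C}^{N\times N}$ and $\{\omega_j\}_{j\in\mathbb{N}}\subset\mathbb{C}\setminus\{0\}$. For $\iota\in\{1,2\}$ let $\{\mathcal{Q}^{(\iota)}_j\}_{j\in\mathbb{N}}$ and $\{\mathcal{P}^{(\iota)}_j\}_{j\in\mathbb{N}}$ be sequences of linear subspaces of $\mathbb{C}^N$ with $\mathcal{Q}^{(\iota)}_{j+1}\subseteq\mathcal{Q}^{(\iota)}_j$ and $\mathcal{P}^{(\iota)}_{j+1}\supseteq\mathcal{P}^{(\iota)}_j$ for all $j\in\mathbb{N}$, and suppose $\mathcal{Q}^{(1)}_j\subseteq\mathcal{Q}^{(2)}_j$ and $\mathcal{P}^{(1)}_j\supseteq\mathcal{P}^{(2)}_j$ for all $j\in\mathbb{N}$. Let $\mathcal{M}^{(\iota)}_j$, $j\in\mathbb{N}_0$, be the $\mathcal{M}$-spaces defined by $\mathcal{M}^{(\iota)}_0=\mathbb{C}^N$ and $$\mathcal{M}^{(\iota)}_j = (I-\omega_j A)\cdot\big(\mathcal{M}^{(\iota)}_{j-1}\cap(\mathcal{P}^{(\iota)}_j)^\perp\big) + \mathcal{Q}^{(\iota)}_j,\quad j\in\mathbb{N}.$$ Then $\mathcal{M}^{(\iota)}_{j+1}\subseteq\mathcal{M}^{(\iota)}_j$ for all $j\in\mathbb{N}_0$ and $\iota\in\{1,2\}$, and $\mathcal{M}^{(1)}_j\subseteq\mathcal{M}^{(2)}_j$ for all $j\in\mathbb{N}_0$.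
   Context: $(\cdot)^\perp$ denotes the orthogonal complement in $\mathbb{C}^N$ with respect to the standard Hermitian inner product, and $+$ denotes the sum of subspaces. The spaces $\mathcal{Q}_j$ are called add-spaces and the $\mathcal{P}_j$ cut-spaces. *)

(* Defs.v *)
From HB Require Import structures.
From mathcomp Require Import all_boot all_order all_algebra.
From mathcomp Require Import complex.
From mathcomp Require Import reals.
Set Implicit Arguments. Unset Strict Implicit. Unset Printing Implicit Defensive.
Import Order.TTheory GRing.Theory Num.Theory.
Local Open Scope ring_scope.
Local Open Scope complex_scope.

(* Vectors of C^N are row vectors 'rV[C]_N; a linear subspace of C^N is
   represented (mxalgebra style) by a square matrix 'M[C]_N whose row space
   is the subspace. *)

(* Orthogonal complement w.r.t. the standard Hermitian inner product
   <v,w> = \sum_i v_i (w_i)^* : v is orthogonal to every row of S iff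
   v *m (conj S)^T = 0. *)
Definition perpmx (C : numClosedFieldType) (N : nat) (S : 'M[C]_N) : 'M[C]_N :=
  kermx (map_mx Num.conj S)^T.

(* Image of the subspace S under the linear map x |-> B x (B acting on
   column vectors); in row-vector form, v |-> v *m B^T. *)
Definition imgmx (C : numClosedFieldType) (N : nat) (B S : 'M[C]_N) : 'M[C]_N :=
  (S *m B^T)%R.

Fixpoint Mspace (C : numClosedFieldType) (N : nat) (A : 'M[C]_N)
    (omega : nat -> C) (P Q : nat -> 'M[C]_N) (j : nat) : 'M[C]_N :=
  match j with
  | 0 => 1%:M
  | j'.+1 =>
      (imgmx (1%:M - omega j'.+1 *: A)
             (Mspace A omega P Q j' :&: perpmx (P j'.+1)) + Q j'.+1)%MS
  end.

(* Main.v *)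
Require Import Defs.
From HB Require Import structures.
From mathcomp Require Import all_boot all_order all_algebra.
From mathcomp Require Import complex.
From mathcomp Require Import reals.
Import Order.TTheory GRing.Theory Num.Theory.
Local Open Scope ring_scope.
Lemma MspaceS (C : numClosedFieldType) (N : nat) (A : 'M[C]_N) omega P Q j :
  Mspace A omega P Q j.+1 =
  (imgmx (1%:M - omega j.+1 *: A) (Mspace A omega P Q j :&: perpmx (P j.+1)) + Q j.+1)%MS.
Proof. by []. Qed.

Lemma perpmxS (C : numClosedFieldType) (N : nat) (S T : 'M[C]_N) :
  (S <= T)%MS -> (perpmx T <= perpmx S)%MS.
Proof.
move=> /submxP [D ->]; rewrite /perpmx.
apply/sub_kermxP.
rewrite map_mxM trmx_mul mulmxA.
by have /sub_kermxP -> := submx_refl (kermx (map_mx Num.conj T)^T); rewrite mul0mx.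
Qed.

Lemma imgmxS (C : numClosedFieldType) (N : nat) (B S T : 'M[C]_N) :
  (S <= T)%MS -> (imgmx B S <= imgmx B T)%MS.
Proof. by move=> h; rewrite /imgmx submxMr. Qed.

Lemma key_id (C : fieldType) (N : nat) (A Y : 'M[C]_N) (w w' : C) :
  w != 0 ->
  Y *m (1%:M - w' *: A)^T =
  (1 - w' / w) *: Y + (w' / w) *: (Y *m (1%:M - w *: A)^T).
Proof.
move=> hw.
have tr c : (1%:M - c *: A)^T = 1%:M - c *: A^T.
  by rewrite linearB /= linearZ /= trmx1.
rewrite !tr !mulmxBr !mulmx1 -!scalemxAr.
rewrite scalerBr scalerA divfK // scalerBl scale1r.
by rewrite addrA subrK.
Qed.

Lemma mono_gen (C : numClosedFieldType) (N : nat) (A : 'M[C]_N) omega (P Q : nat -> 'M[C]_N) :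
  (forall j, (0 < j)%N -> omega j != 0) ->
  (forall j, (0 < j)%N -> (Q j.+1 <= Q j)%MS) ->
  (forall j, (0 < j)%N -> (P j <= P j.+1)%MS) ->
  forall j, (Mspace A omega P Q j.+1 <= Mspace A omega P Q j)%MS.
Proof.
move=> hw hQ hP; elim=> [|j IH]; first by rewrite [X in (_ <= X)%MS]/= submx1.
rewrite [X in (X <= _)%MS]MspaceS.
rewrite addsmx_sub; apply/andP; split; last first.
  by apply: (submx_trans (hQ j.+1 isT)); rewrite MspaceS addsmxSr.
set Y := (_ :&: _)%MS.
rewrite /imgmx (@key_id _ _ A Y (omega j.+1) _ (hw j.+1 isT)).
apply: addmx_sub; apply: scalemx_sub; first exact: capmxSl.
rewrite MspaceS; apply: (submx_trans _ (addsmxSl _ _)).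
apply: imgmxS; apply: capmxS => //.
exact: (@perpmxS _ _ _ _ (hP j.+1 isT)).
Qed.

Theorem theorem1 (R : realType) (N : nat) (A : 'M[R[i]]_N)
    (omega : nat -> R[i])
    (Q1 P1 Q2 P2 : nat -> 'M[R[i]]_N) :
  (forall j, (0 < j)%N -> omega j != 0) ->
  (forall j, (0 < j)%N -> (Q1 j.+1 <= Q1 j)%MS) ->
  (forall j, (0 < j)%N -> (P1 j <= P1 j.+1)%MS) ->
  (forall j, (0 < j)%N -> (Q2 j.+1 <= Q2 j)%MS) ->
  (forall j, (0 < j)%N -> (P2 j <= P2 j.+1)%MS) ->
  (forall j, (0 < j)%N -> (Q1 j <= Q2 j)%MS) ->
  (forall j, (0 < j)%N -> (P2 j <= P1 j)%MS) ->
  (forall j, (Mspace A omega P1 Q1 j.+1 <= Mspace A omega P1 Q1 j)%MS) /\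
  (forall j, (Mspace A omega P2 Q2 j.+1 <= Mspace A omega P2 Q2 j)%MS) /\
  (forall j, (Mspace A omega P1 Q1 j <= Mspace A omega P2 Q2 j)%MS).
Proof.
move=> hw hQ1 hP1 hQ2 hP2 hQ hP.
split; first exact: (@mono_gen _ _ A omega P1 Q1 hw hQ1 hP1).
split; first exact: (@mono_gen _ _ A omega P2 Q2 hw hQ2 hP2).
elim=> [|j IH]; first exact: submx_refl.
rewrite !MspaceS; apply: addsmxS; last exact: hQ.
exact: (@imgmxS _ _ _ _ _ (capmxS IH (@perpmxS _ _ _ _ (hP j.+1 isT)))).
Qed.
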